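(* Let $\epsilon\ge 0$ and let $A\subseteq\{0,1\}^n$ with $|A|\ge 2^{(1-\epsilon)n}$. Then for any $L\subseteq[n]$ there is a subset $A'\subseteq A$ that is $\epsilon$-dense with respect to $L$.
   Context: $[n]=\{1,\dots,n\}$. For $x\in\{0,1\}^n$ and $P\subseteq[n]$, $x_P\in\{0,1\}^P$ denotes the projection of $x$ onto the coordinates in $P$, and for $X\subseteq\{0,1\}^n$, $X_P=\{x_P: x\in X\}$. A set $A\subseteq\{0,1\}^n$ is $\epsilon$-dense with respect to $L\subseteq[n]$ if $|A_L|\ge 2^{|L|-\epsilon n-1}$ and for every $a\in A$ the number of $a'\in A$ with $a'_L=a_L$ is at least $2^{n-|L|-\epsilon n-1}$. *)

(* Defs.v *)
From mathcomp Require Import all_boot.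
From Stdlib Require Import Reals.

Set Implicit Arguments.
Unset Strict Implicit.
Unset Printing Implicit Defensive.

(* {0,1}^n is represented as {ffun 'I_n -> bool}; [n] is 'I_n (0-indexed). *)
Notation cube n := {ffun 'I_n -> bool}.

(* Projection x_L of x onto the coordinates in L, encoded as the point of the
   cube that agrees with x on L and is false outside L (this is in bijection
   with {0,1}^L, so it preserves equality of projections and cardinalities). *)
Definition proj n (L : {set 'I_n}) (x : cube n) : cube n :=
  [ffun i => (i \in L) && x i].

Definition projset n (L : {set 'I_n}) (X : {set cube n}) : {set cube n} :=
  [set proj L x | x in X].

Definition eps_dense n (eps : R) (L : {set 'I_n}) (A : {set cube n}) : Prop :=
  (Rpower 2 (INR #|L| - eps * INR n - 1) <= INR #|projset L A|)%R /\
  (forall a, a \in A ->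
     (Rpower 2 (INR n - INR #|L| - eps * INR n - 1)
        <= INR #|[set a' in A | proj L a' == proj L a]|)%R).

(* Main.v *)
Require Import Defs.
From mathcomp Require Import all_boot.
From Stdlib Require Import Reals Lra.

Lemma INR_exp2 k : INR (expn 2 k) = Rpower 2 (INR k).
Proof.
rewrite Rpower_pow; last lra.
elim: k => [|k IH]; first by rewrite expn0 /=.
rewrite expnS -multE mult_INR IH /=; lra.
Qed.

Lemma card_projset n (L : {set 'I_n}) (X : {set cube n}) :
  #|projset L X| <= expn 2 #|L|.
Proof.
pose f (x : cube n) := [set i | x i].
have finj : injective f.
  move=> x y /setP H; apply/ffunP => i; move: (H i); by rewrite !inE.
rewrite -(card_imset _ finj) -card_powerset; apply: subset_leq_card.
apply/subsetP => s /imsetP [x /imsetP [y _ ->] ->].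
rewrite powersetE; apply/subsetP => i; rewrite inE /proj ffunE.
by case/andP.
Qed.

Lemma card_fiber n (L : {set 'I_n}) (X : {set cube n}) p :
  #|[set a in X | proj L a == p]| <= expn 2 (n - #|L|).
Proof.
pose g (x : cube n) := [set i | (i \notin L) && x i].
have ginj : {in [set a in X | proj L a == p] &, injective g}.
  move=> x y; rewrite !inE => /andP [_ /eqP Hx] /andP [_ /eqP Hy] /setP H.
  apply/ffunP => i; case Hi: (i \in L).
    move: Hx; rewrite -Hy => /ffunP /(_ i); by rewrite /proj !ffunE Hi.
  move: (H i); by rewrite !inE Hi.
have -> : n - #|L| = #|~: L| by have := cardsC L; rewrite card_ord => E; rewrite -{1}E addKn.
rewrite -(card_in_imset ginj) -card_powerset; apply: subset_leq_card.
apply/subsetP => s /imsetP [x _ ->].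
rewrite powersetE; apply/subsetP => i; rewrite !inE.
by case/andP.
Qed.

Lemma card_partproj n (L : {set 'I_n}) (X : {set cube n}) :
  #|X| = \sum_(p in projset L X) #|[set a in X | proj L a == p]|.
Proof.
rewrite -sum1_card (partition_big (proj L) (mem (projset L X))) /=.
  apply: eq_bigr => p _; rewrite -sum1_card; apply: eq_bigl => a.
  by rewrite inE.
move=> a Ha; exact: imset_f.
Qed.

Lemma INR_sum_le (T : finType) (S : {set T}) (f : T -> nat) (r : R) :
  (forall i, i \in S -> (INR (f i) <= r)%R) ->
  (INR (\sum_(i in S) f i) <= INR #|S| * r)%R.
Proof.
move=> H; rewrite -sum1_card.
elim/big_rec2: _ => [|i x y Hi IH]; first by rewrite /=; lra.
rewrite -!plusE !plus_INR /=.
have := H i Hi; lra.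
Qed.

Theorem claim1 (n : nat) (eps : R) (A : {set cube n}) :
  (0 <= eps)%R ->
  (Rpower 2 ((1 - eps) * INR n) <= INR #|A|)%R ->
  forall L : {set 'I_n}, exists A' : {set cube n}, A' \subset A /\ eps_dense eps L A'.
Proof.
move=> He HA L.
set t := Rpower 2 (INR n - INR #|L| - eps * INR n - 1).
pose fib (X : {set cube n}) a := [set a' in X | proj L a' == proj L a].
pose A' := [set a in A | if Rle_dec t (INR #|fib A a|) then true else false].
have fibeq : forall X a b, proj L a = proj L b -> fib X a = fib X b.
  by move=> X a b E; rewrite /fib E.
have sA : A' \subset A by apply/subsetP => a; rewrite inE => /andP [].
exists A'; split => //.
have Lle : #|L| <= n by apply: leq_trans (leq_addr #|~: L| _) _; rewrite cardsC card_ord.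
have INRm : INR (n - #|L|) = (INR n - INR #|L|)%R.
  by rewrite -minusE minus_INR //; apply/leP.
have tpos : (0 < t)%R by apply: exp_pos.
have fibA' : forall a, a \in A' -> (t <= INR #|fib A' a|)%R.
  move=> a Ha.
  have -> : fib A' a = fib A a.
    apply/setP => b; rewrite !inE; apply/idP/idP.
      by case/andP => /andP [-> _] ->.
    case/andP => Hb /eqP E; rewrite Hb E eqxx andbT /=.
    by rewrite (fibeq A b a E); move: Ha; rewrite inE => /andP [].
  move: Ha; rewrite inE => /andP [_]; by case: Rle_dec.
split; last by move=> a Ha; exact: fibA'.
set D := A :\: A'.
have cardA : #|A| = #|A'| + #|D|.
  by rewrite -(cardsID A' A) (setIidPr sA).
have HD : (INR #|D| <= Rpower 2 (INR n - eps * INR n - 1))%R.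
  rewrite (card_partproj _ L D).
  apply: Rle_trans (@INR_sum_le _ _ _ t _) _.
    move=> p /imsetP [d Hd ->].
    have Hsub : [set a in D | proj L a == proj L d] \subset fib A d.
      apply/subsetP => b; rewrite !inE => /andP [/andP [_ ->] ->] //.
    apply: Rle_trans (le_INR _ _ (leP (subset_leq_card Hsub))) _.
    move: Hd; rewrite !inE => /andP [Hd HdA]; move: Hd; rewrite HdA /=.
    case: Rle_dec => // Hn _; lra.
  apply: Rle_trans (Rmult_le_compat_r _ _ _ (Rlt_le _ _ tpos)
                     (le_INR _ _ (leP (card_projset _ L D)))) _.
  rewrite INR_exp2 /t -Rpower_plus; apply: Req_le; f_equal; ring.
have HA' : (Rpower 2 (INR n - eps * INR n - 1) <= INR #|A'|)%R.
  have E2 : Rpower 2 ((1 - eps) * INR n) =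
            (2 * Rpower 2 (INR n - eps * INR n - 1))%R.
    have -> : ((1 - eps) * INR n = 1 + (INR n - eps * INR n - 1))%R by ring.
    by rewrite Rpower_plus Rpower_1 //; lra.
  move: HA; rewrite cardA -plusE plus_INR E2; lra.
have HA'2 : (INR #|A'| <= INR #|projset L A'| * Rpower 2 (INR n - INR #|L|))%R.
  rewrite -INRm -INR_exp2 -mult_INR; apply: le_INR; apply/leP.
  rewrite multE (card_partproj _ L A') -sum_nat_const; apply: leq_sum => p _.
  exact: card_fiber.
have Hp := exp_pos (ln 2 * (INR n - INR #|L|)).
have E3 : Rpower 2 (INR n - eps * INR n - 1) =
          (Rpower 2 (INR #|L| - eps * INR n - 1) * Rpower 2 (INR n - INR #|L|))%R.
  by rewrite -Rpower_plus; f_equal; ring.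
rewrite E3 in HA'.
apply: (Rmult_le_reg_r (Rpower 2 (INR n - INR #|L|))) ; first exact: exp_pos.
exact: Rle_trans HA' HA'2.
Qed.
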